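(* Let $G=(V,E,s,t)$ be a directed $st$-graph. Then $G$ is weak if and only if there exist a minimal vertex separator $T$ of $G$, vertices $a,b\in T$ (possibly $a=b$), and a directed walk of length at least one from $a$ to $b$.
   Context: A directed $st$-graph $G=(V,E,s,t)$ is a finite directed graph with no self-loops and no parallel edges, with distinct source $s$ (no incoming edges) and sink $t$ (no outgoing edges), such that every vertex lies on some directed walk from $s$ to $t$. An $st$-path (or just path) is a directed walk from $s$ to $t$, possibly repeating vertices; $P(G)$ denotes the set of such walks. A channel on $G$ is a charge function $\eta:V\to\mathbb{N}\cup\{\infty\}$ with $\eta(s)=\eta(t)=\infty$ and $\eta(v)\in\mathbb{N}$ otherwise. A flow for $\eta$ is a finitely supported function $\phi:P(G)\to\mathbb{N}$ such that $\phi(v):=\sum_{p\in P(G)} m_v(p)\,\phi(p)\le\eta(v)$ for all $v\in V$, where $m_v(p)$ is the number of occurrences of $v$ in $p$. Its value is $\sum_p\phi(p)$. $\max_\eta$ is the maximum value of a flow for $\eta$; $\eta$ is dead if $\max_\eta=0$. The residual of $\eta$ after $\phi$ is $\eta'(v)=\eta(v)-\phi(v)$. A flow $\phi$ inhibits $\eta$ if the residual of $\eta$ after $\phi$ is dead; $\min_\eta$ is the smallest value of an inhibiting flow for $\eta$. $G$ is weak if $\min_\eta\neq\max_\eta$ for some channel $\eta$ on $G$. A vertex separator is a set $T\subseteq V$ such that every $st$-walk contains a vertex of $T$ (so $\{s\}$ and $\{t\}$ are separators); a minimal vertex separator (mvs) is an inclusion-minimal vertex separator. *)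

(* Defs.v *)
From mathcomp Require Import all_boot.
Set Implicit Arguments. Unset Strict Implicit. Unset Printing Implicit Defensive.

Section STGraphs.
Variables (V : finType) (E : rel V) (s t : V).

(* A directed walk from a to b, given as the list of vertices after a. *)
Definition walk (a b : V) (p : seq V) : bool := path E a p && (last a p == b).

(* st-walks (st-paths), as the full list of visited vertices (with repetitions). *)
Definition st_walk (w : seq V) : bool :=
  if w is x :: r then (x == s) && walk x t r else false.

(* Directed st-graph: no self loops (no parallel edges is automatic for a
   relation), s <> t, s has no incoming, t no outgoing edges, every vertex
   lies on some st-walk. *)
Definition st_graph : Prop :=
  [/\ forall v, ~~ E v v, s != t, forall v, ~~ E v s, forall v, ~~ E t v
    & forall v, exists2 w, st_walk w & v \in w].

(* A channel is a charge function V -> N u {oo} with eta s = eta t = oo and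
   finite values elsewhere; we represent it by eta : V -> nat whose values at
   s and t are ignored (they are implicitly oo). *)
Definition channel := V -> nat.

(* A finitely supported flow phi : P(G) -> N is represented by a finite
   multiset of st-walks (a list; walk p has multiplicity phi(p)). *)
Definition flowT := seq (seq V).

Definition load (f : flowT) (v : V) : nat := sumn [seq count_mem v w | w <- f].

Definition value (f : flowT) : nat := size f.

Definition is_flow (eta : channel) (f : flowT) : Prop :=
  all st_walk f /\ forall v, v != s -> v != t -> load f v <= eta v.

(* max_eta = k (a finite value); max_eta = oo iff no k satisfies this *)
Definition is_max (eta : channel) (k : nat) : Prop :=
  (exists2 f, is_flow eta f & value f = k) /\
  (forall f, is_flow eta f -> value f <= k).

Definition dead (eta : channel) : Prop := is_max eta 0.

Definition residual (eta : channel) (f : flowT) : channel :=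
  fun v => eta v - load f v.

Definition inhibits (eta : channel) (f : flowT) : Prop :=
  is_flow eta f /\ dead (residual eta f).

(* min_eta = k (finite); min_eta = oo (inf of empty set) iff no k satisfies this *)
Definition is_min (eta : channel) (k : nat) : Prop :=
  (exists2 f, inhibits eta f & value f = k) /\
  (forall f, inhibits eta f -> k <= value f).

(* min_eta = max_eta as extended naturals *)
Definition min_eq_max (eta : channel) : Prop :=
  forall k, is_min eta k <-> is_max eta k.

Definition weak : Prop := exists eta : channel, ~ min_eq_max eta.

Definition separator (T : {set V}) : Prop :=
  forall w, st_walk w -> exists2 x, x \in w & x \in T.

Definition mvs (T : {set V}) : Prop :=
  separator T /\ forall T' : {set V}, T' \proper T -> ~ separator T'.

End STGraphs.

(* Main.v *)
Require Import Defs.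
From mathcomp Require Import all_boot.
From Stdlib Require Import Classical.
Set Implicit Arguments. Unset Strict Implicit. Unset Printing Implicit Defensive.


Lemma load_cons (V : finType) w f (v : V) : load (w :: f) v = count_mem v w + load f v.
Proof. by []. Qed.

Lemma load_cat (V : finType) f g (v : V) : load (f ++ g) v = load f v + load g v.
Proof. by rewrite /load map_cat sumn_cat. Qed.

Lemma sum_eqn (V : finType) (T : {set V}) x : \sum_(c in T) ((x == c) : nat) = (x \in T).
Proof.
case: (boolP (x \in T)) => xT.
  rewrite (bigD1 x) //= eqxx big1 // => c /andP[_ /negbTE]; by rewrite eq_sym => ->.
by rewrite big1 // => c cT; case: eqP => // ex; rewrite ex cT in xT.
Qed.

Lemma sum_count (V : finType) (T : {set V}) w : \sum_(c in T) count_mem c w = count (mem T) w.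
Proof.
elim: w => [|x w IH] /=; first by rewrite big1.
by rewrite big_split /= IH sum_eqn.
Qed.

Lemma ub (V : finType) (E : rel V) (s t : V) (eta : channel V) (T : {set V}) g :
  separator E s t T -> (forall c, c \in T -> (c != s) && (c != t)) ->
  is_flow E s t eta g -> value g <= \sum_(c in T) eta c.
Proof.
move=> sepT intT [allg lg].
apply: (@leq_trans (\sum_(c in T) load g c)); last first.
  apply: leq_sum => c cT; case/andP: (intT c cT) => ??; exact: lg.
elim: g allg {lg} => [|w g IH] /=; first by [].
case/andP=> sw ag.
under eq_bigr do rewrite load_cons.
rewrite big_split /=.
have h1 : 0 < \sum_(c in T) count_mem c w.
  rewrite sum_count -has_count; case: (sepT w sw) => x xw xT; apply/hasP; by exists x.
have := leq_add h1 (IH ag); by rewrite add1n.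
Qed.

Lemma prefix_lem (V : finType) (E : rel V) (T : {set V}) x r : path E x r -> has (mem T) r ->
  exists p0 y, [/\ y \in T, y \in r, ~~ has (mem T) p0 & path E x (rcons p0 y)].
Proof.
elim: r x => [|z r IH] x //= /andP[exz pzr].
case: (boolP (z \in T)) => zT /= hr.
  by exists [::], z; rewrite /= zT mem_head exz.
have [p0 [y [yT yr hp pp]]] := IH z pzr hr.
exists (z :: p0), y; split => //=; first by rewrite in_cons yr orbT.
  by rewrite (negbTE zT).
by rewrite exz.
Qed.

Lemma suffix_lem (V : finType) (E : rel V) (T : {set V}) x r : path E x r -> (x \in T) || has (mem T) r ->
  exists y q, [/\ y \in T, y \in x :: r, ~~ has (mem T) q, path E y q & last y q = last x r].
Proof.
elim: r x => [|z r IH] x /=.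
  by move=> _; rewrite orbF => xT; exists x, [::]; rewrite mem_head.
case/andP=> exz pzr H.
case: (boolP ((z \in T) || has (mem T) r)) => Hz.
  have [y [q [yT yr hq pq lq]]] := IH z pzr Hz.
  exists y, q; split=> //; by rewrite in_cons yr orbT.
exists x, (z :: r); rewrite /= exz pzr mem_head; split=> //.
by move: H; rewrite (negbTE Hz) orbF.
Qed.

Lemma two_hits (V : finType) (E : rel V) (T : {set V}) x r : path E x r -> 1 < count (mem T) (x :: r) ->
  exists a b p, [/\ a \in T, b \in T, p != [::] & walk E a b p].
Proof.
elim: r x => [|z r IH] x /=.
  by move=> _; rewrite addn0; case: (x \in T).
case/andP=> exz pzr.
case: (boolP (x \in T)) => xT /=.
  rewrite add1n ltnS => cz.
  have hz : has (mem T) (z :: r) by rewrite has_count.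
  have pxz : path E x (z :: r) by rewrite /= exz.
  have [p0 [y [yT _ _ pp]]] := prefix_lem pxz hz.
  exists x, y, (rcons p0 y); split => //.
    by rewrite -size_eq0 size_rcons.
  by rewrite /walk pp last_rcons eqxx.
rewrite add0n => c; exact: (IH z pzr c).
Qed.

Lemma mvs_exists_n (V : finType) (E : rel V) (s t : V) n : forall Z : {set V}, #|Z| <= n ->
  separator E s t Z -> exists T : {set V}, T \subset Z /\ mvs E s t T.
Proof.
elim: n => [|n IH] Z cZ sZ;
  (case: (classic (exists T' : {set V}, T' \proper Z /\ separator E s t T')) => [[T' [pT sT]]|nT];
  [| by exists Z; split => //; split => // T' pT sT; apply: nT; exists T']).
  by have := leq_trans (proper_card pT) cZ.
have cT : #|T'| <= n by have := leq_trans (proper_card pT) cZ; rewrite ltnS.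
have [T [sub mT]] := IH T' cT sT.
exists T; split => //; apply: subset_trans sub (proper_sub pT).
Qed.

Lemma dead_sep (V : finType) (E : rel V) (s t : V) (eta : channel V) : dead E s t eta ->
  separator E s t [set v | (v != s) && (v != t) && (eta v == 0)].
Proof.
move=> [_ dl] w sw; apply: NNPP => nx.
case: w sw nx => [|x r] //= /andP[/eqP xs /andP[pr /eqP lr0]] nx; subst x.
move: lr0; case: (shortenP pr) => p' pp' up' sub' lr.
have fl : is_flow E s t eta [:: s :: p'].
  split; first by rewrite /= andbT eqxx /walk pp' lr eqxx.
  move=> v vs vt; rewrite /load /= addn0 eq_sym (negbTE vs) add0n count_uniq_mem; last by case/andP: up'.
  case: (boolP (v \in p')) => //= vin.
  rewrite lt0n; apply/negP => e0; apply: nx; exists v.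
    by rewrite in_cons sub' ?orbT.
  by rewrite inE vs vt e0.
by have := dl _ fl.
Qed.

Lemma sum_load_le (V : finType) (T : {set V}) (f : seq (seq V)) :
  (forall w, w \in f -> count (mem T) w <= 1) -> \sum_(c in T) load f c <= value f.
Proof.
elim: f => [|w f IH] H /=; first by rewrite big1.
under eq_bigr do rewrite load_cons.
rewrite big_split /= sum_count -add1n leq_add //.
  by apply: H; rewrite mem_head.
by apply: IH => w' w'f; apply: H; rewrite in_cons w'f orbT.
Qed.

Lemma key (V : finType) (E : rel V) (s t : V) (eta : channel V) f g :
  ~ (exists T : {set V}, mvs E s t T /\ exists a b, [/\ a \in T, b \in T & exists p : seq V, p != [::] /\ walk E a b p]) ->
  inhibits E s t eta f -> is_flow E s t eta g -> value g <= value f.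
Proof.
move=> NW [[af lf] dd] fg.
have sZ := dead_sep dd.
have [T [sub [sT mT]]] := mvs_exists_n (leqnn _) sZ.
have intT : forall c, c \in T -> [&& c != s, c != t & eta c - load f c == 0].
  by move=> c cT; have := subsetP sub c cT; rewrite inE /residual -andbA.
apply: (leq_trans (ub sT _ fg)).
  by move=> c /intT /and3P[-> ->].
have -> : \sum_(c in T) eta c = \sum_(c in T) load f c.
  apply: eq_bigr => c cT; case/and3P: (intT c cT) => cs ct; rewrite subn_eq0 => le.
  by apply/eqP; rewrite eqn_leq le lf.
apply: sum_load_le => w wf.
rewrite leqNgt; apply/negP => c2.
have := allP af w wf; case: w wf c2 => [|x r] // wf c2 /andP[_ /andP[pr _]].
have [a [b [p [aT bT pn wp]]]] := two_hits pr c2.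
apply: NW; exists T; split; first by split.
by exists a, b; split => //; exists p.
Qed.

Lemma cnt0 (V : finType) (T : {set V}) c l : c \in T -> ~~ has (mem T) l -> count_mem c l = 0.
Proof. move=> cT hl; apply/count_memPn; apply: contraNN hl => cl; apply/hasP; by exists c. Qed.

Lemma cnt_rc (V : finType) (T : {set V}) c x l : c \in T -> ~~ has (mem T) l -> count_mem c (rcons l x) = (x == c).
Proof. by move=> cT hl; rewrite -cats1 count_cat (cnt0 cT hl) /= addn0. Qed.

Lemma st_walk_cat (V : finType) (E : rel V) (s t : V) x p0 q :
  path E s (rcons p0 x) -> path E x q -> last x q = t -> st_walk E s t (s :: (rcons p0 x ++ q)).
Proof.
by move=> h1 h2 h3; rewrite /st_walk /walk eqxx cat_path h1 last_rcons h2 last_cat last_rcons h3 eqxx.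
Qed.

Lemma through (V : finType) (E : rel V) (s t : V) (T : {set V}) x :
  mvs E s t T -> x \in T -> (forall c, c \in T -> (c != s) && (c != t)) ->
  exists p0 q, [/\ ~~ has (mem T) p0, ~~ has (mem T) q, path E s (rcons p0 x), path E x q & last x q = t].
Proof.
move=> [sT mT] xT intT; apply: NNPP => H.
apply: (mT _ (properD1 xT)) => w sw; apply: NNPP => nw; apply: H.
have onlyx : forall y, y \in w -> y \in T -> y = x.
  move=> y yw yT; apply/eqP; apply: NNPP => /negP nyx; apply: nw; exists y => //.
  by rewrite in_setD1 nyx.
case: w sw nw onlyx => [|x0 r] // sw nw onlyx.
move: (sw) => /andP[/eqP e0 /andP[pr /eqP lr]]; subst x0.
have [z zw zT] := sT _ sw.
have hr : has (mem T) r.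
  move: zw; rewrite in_cons; case/orP => [/eqP zs|zr].
    by move: (intT z zT); rewrite zs eqxx.
  by apply/hasP; exists z.
have [p0 [y0 [y0T y0r hp0 pp0]]] := prefix_lem pr hr.
have y0w : y0 \in s :: r by rewrite in_cons y0r orbT.
have e1 := onlyx y0 y0w y0T; subst y0.
have [y1 [q [y1T y1r hq pq lq]]] := suffix_lem pr (introT orP (or_intror hr)).
have e2 := onlyx y1 y1r y1T; subst y1.
by exists p0, q; split => //; rewrite lq.
Qed.

Lemma bwd (V : finType) (E : rel V) (s t : V) : st_graph E s t ->
  (exists T : {set V}, mvs E s t T /\ exists a b, [/\ a \in T, b \in T & exists p : seq V, p != [::] /\ walk E a b p]) -> weak E s t.
Proof.
move=> [nl nst ns nt _] [T [[sT mT] [a [b [aT bT [p [pn /andP[pab /eqP lab]]]]]]]].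
have mT' : mvs E s t T by [].
have hp : has (mem T) p.
  case: p pn pab lab => [|z p] // _ _ lab; apply/hasP; exists b => //; rewrite -lab; exact: (mem_last z p).
have [pp [y [yT _ hpp ppy]]] := prefix_lem pab hp.
have intT : forall c, c \in T -> (c != s) && (c != t).
  move=> c cT; apply/andP; split; apply/negP => /eqP ec; subst c.
  - have ss : separator E s t [set s].
      by move=> [|x r] // /andP[/eqP -> _]; exists s; rewrite ?mem_head ?in_set1.
    have eT : T = [set s].
      apply: NNPP => ne; apply: (mT _ _ ss); rewrite properEneq eq_sym; apply/andP; split; first by apply/eqP.
      by rewrite sub1set.
    move: yT; rewrite eT in_set1 => /eqP ey; subst y.
    by move: ppy; rewrite rcons_path (negbTE (ns _)) andbF.
  - have st' : separator E s t [set t].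
      move=> [|x r] // /andP[_ /andP[_ /eqP lr]]; exists t; last by rewrite in_set1.
      by rewrite -lr mem_last.
    have eT : T = [set t].
      apply: NNPP => ne; apply: (mT _ _ st'); rewrite properEneq eq_sym; apply/andP; split; first by apply/eqP.
      by rewrite sub1set.
    move: aT; rewrite eT in_set1 => /eqP ea; subst a.
    by case: pp ppy {hpp} => [|z pp] /=; rewrite (negbTE (nt _)).
have [p0a [qa [ha hqa pa pqa lqa]]] := through mT' aT intT.
have [p0y [qy [hy hqy py pqy lqy]]] := through mT' yT intT.
pose wa := s :: (rcons p0a a ++ qa).
pose wy := s :: (rcons p0y y ++ qy).
pose W := s :: (rcons p0a a ++ (rcons pp y ++ qy)).
have swa : st_walk E s t wa := st_walk_cat pa pqa lqa.
have swy : st_walk E s t wy := st_walk_cat py pqy lqy.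
have sW : st_walk E s t W.
  apply: st_walk_cat pa _ _; first by rewrite cat_path ppy last_rcons pqy.
  by rewrite last_cat last_rcons lqy.
have sc : forall c, c \in T -> (s == c) = false.
  by move=> c cT; have /andP[cs _] := intT c cT; rewrite eq_sym (negbTE cs).
have cwa : forall c, c \in T -> count_mem c wa = (a == c).
  by move=> c cT; rewrite /wa /= sc // count_cat (cnt_rc _ cT ha) (cnt0 cT hqa) addn0.
have cwy : forall c, c \in T -> count_mem c wy = (y == c).
  by move=> c cT; rewrite /wy /= sc // count_cat (cnt_rc _ cT hy) (cnt0 cT hqy) addn0.
have cW : forall c, c \in T -> count_mem c W = (a == c) + (y == c).
  move=> c cT; rewrite /W /= sc // !count_cat (cnt_rc _ cT ha) (cnt_rc _ cT hpp).
  by rewrite (cnt0 cT hqy) addn0.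
pose Fmax := [:: wa; wy].
pose Fmin := [:: W].
pose eta : channel V := fun v => if v \in T then load Fmax v else load Fmin v + load Fmax v.
have H2 : forall c, c \in T -> load Fmin c = load Fmax c.
  by move=> c cT; rewrite !load_cons cwa // cwy // cW // addnA.
have H1 : is_flow E s t eta Fmax.
  split; first by apply/allP => w; rewrite !inE => /orP[] /eqP ->.
  by move=> v _ _; rewrite /eta; case: (v \in T) => //; rewrite leq_addl.
have H3 : is_flow E s t eta Fmin.
  split; first by apply/allP => w; rewrite inE => /eqP ->.
  move=> v _ _; rewrite /eta; case: (boolP (v \in T)) => vT; last by rewrite leq_addr.
  by rewrite H2.
have H4 : inhibits E s t eta Fmin.
  split => //; split; first by exists [::].
  move=> g fg; have := ub sT intT fg.
  rewrite big1 // => c cT; by rewrite /residual /eta cT H2 // subnn.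
have H5 : is_max E s t eta 2.
  split; first by exists Fmax.
  move=> g fg; apply: (leq_trans (ub sT intT fg)).
  rewrite (eq_bigr (fun c => (a == c) + (y == c))); last first.
    by move=> c cT; rewrite /eta cT !load_cons cwa // cwy // addn0.
  by rewrite big_split /= !sum_eqn aT yT.
exists eta => meq.
have [_ hmin] := (meq 2).2 H5.
by have := hmin _ H4.
Qed.

Lemma fwd (V : finType) (E : rel V) (s t : V) : weak E s t ->
   exists T : {set V}, mvs E s t T /\
     exists a b, [/\ a \in T, b \in T &
       exists p : seq V, p != [::] /\ walk E a b p].
Proof.
move=> [eta neq]; apply: NNPP => NW; apply: neq => k; split.
  move=> [[f inf vf] minf]; split; first by exists f => //; case: inf.
  by move=> g fg; rewrite -vf; exact: key NW inf fg.
move=> [[f ff vf] maxf].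
have inf : inhibits E s t eta f.
  split => //; split; first by exists [::].
  move=> g [ag lg].
  have fl : is_flow E s t eta (f ++ g).
    case: ff => af lf; split; first by rewrite all_cat af ag.
    move=> v vs vt; rewrite load_cat.
    apply: (leq_trans (leq_add (leqnn _) (lg v vs vt))).
    by rewrite /residual subnKC //; exact: lf.
  have := maxf _ fl; rewrite /value size_cat -vf /value.
  by rewrite -{2}(addn0 (size f)) leq_add2l.
split; first by exists f.
by move=> f' inf'; rewrite -vf; exact: key NW inf' ff.
Qed.

Theorem theorem1 (V : finType) (E : rel V) (s t : V) :
  st_graph E s t ->
  (weak E s t <->
   exists T : {set V}, mvs E s t T /\
     exists a b, [/\ a \in T, b \in T &
       exists p : seq V, p != [::] /\ walk E a b p]).
Proof. move=> G; split; [exact: fwd | exact: bwd]. Qed.
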